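(* Let $A$ be a real $2\times 2$ matrix and $B$ a real $1\times 2$ matrix, and let $\mathrm{NT}=\{\vec{x}\in\mathbb{R}^2 : BA^k\vec{x}>0 \text{ for all integers } k\ge 0\}$. Suppose $A$ has a positive eigenvalue $\lambda_1$ and a negative eigenvalue $\lambda_2$ with $\lambda_1<|\lambda_2|$, and eigenvectors $\vec{\beta}_1,\vec{\beta}_2$ for $\lambda_1,\lambda_2$ respectively, with $B\vec{\beta}_1>0$ and $B\vec{\beta}_2>0$. Then $\mathrm{NT}=\{k\vec{\beta}_1: k>0\}$.
   Context: $\mathrm{NT}$ is the non-termination set of the loop ''while $(B\vec{x}>0)$ $\{\vec{x}:=A\vec{x}\}$''. *)

(* Defs.v *)
From Stdlib Require Import Reals.
Open Scope R_scope.

Definition vec2 : Type := (R * R)%type.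

Record mat2 : Type := Mat2 { m11 : R; m12 : R; m21 : R; m22 : R }.

Record row2 : Type := Row2 { b1 : R; b2 : R }.

Definition mat2_mul (M N : mat2) : mat2 :=
  Mat2 (m11 M * m11 N + m12 M * m21 N) (m11 M * m12 N + m12 M * m22 N)
       (m21 M * m11 N + m22 M * m21 N) (m21 M * m12 N + m22 M * m22 N).

Definition mat2_id : mat2 := Mat2 1 0 0 1.

Fixpoint mat2_pow (M : mat2) (k : nat) : mat2 :=
  match k with O => mat2_id | S k' => mat2_mul M (mat2_pow M k') end.

Definition mat2_app (M : mat2) (x : vec2) : vec2 :=
  (m11 M * fst x + m12 M * snd x, m21 M * fst x + m22 M * snd x).

(* B x  (a 1x1 matrix, identified with a real) *)
Definition row2_app (B : row2) (x : vec2) : R := b1 B * fst x + b2 B * snd x.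

Definition vscale (c : R) (x : vec2) : vec2 := (c * fst x, c * snd x).

Definition eigenvector (M : mat2) (l : R) (v : vec2) : Prop :=
  v <> (0, 0) /\ mat2_app M v = vscale l v.

(* Non-termination set of "while (B x > 0) { x := A x }":
   NT = { x in R^2 | B A^k x > 0 for all k >= 0 } *)
Definition NT (A : mat2) (B : row2) (x : vec2) : Prop :=
  forall k : nat, row2_app B (mat2_app (mat2_pow A k) x) > 0.

(* Main.v *)
Require Import Defs.
From Stdlib Require Import Reals Lra Psatz.
Open Scope R_scope.

Lemma app_mul M N v : mat2_app (mat2_mul M N) v = mat2_app M (mat2_app N v).
Proof. destruct M, N, v; unfold mat2_app, mat2_mul; simpl; f_equal; ring. Qed.

Lemma pow_eig A l v : mat2_app A v = vscale l v ->
  forall k, mat2_app (mat2_pow A k) v = vscale (l ^ k) v.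
Proof.
  intros H k; induction k as [|k IH]; simpl.
  - destruct v; unfold mat2_app, vscale; simpl; f_equal; ring.
  - rewrite app_mul, IH. destruct v as [p q]. unfold vscale, mat2_app in *; simpl in *.
    injection H as H1 H2. f_equal.
    + replace (l * l ^ k * p) with (l ^ k * (l * p)) by ring. rewrite <- H1; ring.
    + replace (l * l ^ k * q) with (l ^ k * (l * q)) by ring. rewrite <- H2; ring.
Qed.

Lemma lin M a b v w : mat2_app M (a * fst v + b * fst w, a * snd v + b * snd w)
  = (a * fst (mat2_app M v) + b * fst (mat2_app M w), a * snd (mat2_app M v) + b * snd (mat2_app M w)).
Proof. destruct v, w; unfold mat2_app; simpl; f_equal; ring. Qed.

Theorem lemma10 (A : mat2) (B : row2) (l1 l2 : R) (beta1 beta2 : vec2) :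
  0 < l1 -> l2 < 0 -> l1 < Rabs l2 ->
  eigenvector A l1 beta1 -> eigenvector A l2 beta2 ->
  row2_app B beta1 > 0 -> row2_app B beta2 > 0 ->
  forall x : vec2, NT A B x <-> exists k : R, k > 0 /\ x = vscale k beta1.
Proof.
  intros h1 h2 h3 [n1 e1] [n2 e2] s1 s2 x.
  pose proof (pow_eig _ _ _ e1) as P1. pose proof (pow_eig _ _ _ e2) as P2.
  rewrite Rabs_left in h3 by lra.
  split.
  - intros HNT.
    destruct beta1 as [u1 u2], beta2 as [v1 v2], x as [x1 x2].
    set (s := row2_app B (u1, u2)) in *. set (t := row2_app B (v1, v2)) in *.
    set (d := u1 * v2 - u2 * v1).
    assert (Hd : d <> 0).
    { intro Hd0. apply n2.
      assert (E1 : t * u1 = s * v1).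
      { assert (t * u1 - s * v1 = b2 B * d) by (unfold s, t, d, row2_app; simpl; ring).
        rewrite Hd0 in H. lra. }
      assert (E2 : t * u2 = s * v2).
      { assert (t * u2 - s * v2 = - b1 B * d) by (unfold s, t, d, row2_app; simpl; ring).
        rewrite Hd0 in H. lra. }
      unfold mat2_app, vscale in e1, e2; simpl in e1, e2.
      injection e1 as f1 f2. injection e2 as g1 g2.
      assert (X1 : s * (l1 - l2) * v1 = 0).
      { assert (Y : s * (m11 A * v1 + m12 A * v2) = t * (m11 A * u1 + m12 A * u2)).
        { replace (s * (m11 A * v1 + m12 A * v2)) with (m11 A * (s * v1) + m12 A * (s * v2)) by ring.
          rewrite <- E1, <- E2; ring. }
        rewrite g1, f1 in Y.
        replace (s * (l1 - l2) * v1) with (l1 * (s * v1) - s * (l2 * v1)) by ring.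
        rewrite Y, <- E1; ring. }
      assert (X2 : s * (l1 - l2) * v2 = 0).
      { assert (Y : s * (m21 A * v1 + m22 A * v2) = t * (m21 A * u1 + m22 A * u2)).
        { replace (s * (m21 A * v1 + m22 A * v2)) with (m21 A * (s * v1) + m22 A * (s * v2)) by ring.
          rewrite <- E1, <- E2; ring. }
        rewrite g2, f2 in Y.
        replace (s * (l1 - l2) * v2) with (l1 * (s * v2) - s * (l2 * v2)) by ring.
        rewrite Y, <- E2; ring. }
      assert (s * (l1 - l2) <> 0) by (apply Rmult_integral_contrapositive; split; lra).
      f_equal.
      + apply (Rmult_eq_reg_l (s * (l1 - l2))); lra.
      + apply (Rmult_eq_reg_l (s * (l1 - l2))); lra. }
    set (a := (x1 * v2 - x2 * v1) / d). set (b := (u1 * x2 - u2 * x1) / d).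
    assert (Hx : (x1, x2) = (a * fst (u1,u2) + b * fst (v1,v2), a * snd (u1,u2) + b * snd (v1,v2))).
    { unfold a, b; unfold d in *; simpl; f_equal; field; auto. }
    assert (Hk : forall k, row2_app B (mat2_app (mat2_pow A k) (x1, x2)) = a * l1 ^ k * s + b * l2 ^ k * t).
    { intro k. rewrite Hx, lin, P1, P2. unfold s, t, row2_app, vscale; simpl; ring. }
    assert (Hb : b = 0).
    { destruct (Req_dec b 0) as [|Hb]; auto. exfalso.
      set (m := - l2). set (r := l1 / m).
      assert (Hm : 0 < m) by (unfold m; lra).
      assert (Hr : Rabs r < 1).
      { unfold r. rewrite Rabs_pos_eq. apply (Rmult_lt_reg_r m); [lra|]. replace (l1 / m * m) with l1 by (field; lra). unfold m; lra. apply Rlt_le, Rdiv_lt_0_compat; lra. }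
      assert (Hy : 0 < Rabs b * t / (Rabs a * s + 1)).
      { apply Rdiv_lt_0_compat. apply Rmult_lt_0_compat; [apply Rabs_pos_lt|]; lra.
        pose proof (Rabs_pos a). nra. }
      destruct (pow_lt_1_zero r Hr _ Hy) as [N HN].
      assert (key : forall n, (n >= N)%nat -> b * (-1) ^ n < 0 -> False).
      { intros n hn hneg. specialize (HN n hn). specialize (HNT n). rewrite Hk in HNT.
        assert (El1 : l1 = r * m) by (unfold r; field; lra).
        assert (El2 : l2 = -1 * m) by (unfold m; ring).
        rewrite El1, El2, !Rpow_mult_distr in HNT.
        pose proof (pow_lt m n Hm) as pm.
        assert (Hbn : b * (-1) ^ n = - Rabs b).
        { pose proof (pow_1_abs n) as pa.
          destruct (Rle_dec 0 b).
          - rewrite Rabs_pos_eq by lra. destruct (Rle_dec 0 ((-1)^n)).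
            + rewrite Rabs_pos_eq in pa by lra. nra.
            + rewrite Rabs_left in pa by lra. nra.
          - rewrite Rabs_left by lra. destruct (Rle_dec 0 ((-1)^n)).
            + rewrite Rabs_pos_eq in pa by lra. nra.
            + rewrite Rabs_left in pa by lra. nra. }
        assert (Q : a * s * r ^ n < Rabs b * t).
        { assert (a * s * r ^ n <= Rabs a * s * Rabs (r ^ n)).
          { eapply Rle_trans; [apply Rle_abs|]. rewrite !Rabs_mult, (Rabs_pos_eq s) by lra. lra. }
          assert (Rabs a * s * Rabs (r ^ n) <= Rabs a * s * (Rabs b * t / (Rabs a * s + 1))).
          { pose proof (Rabs_pos a). apply Rmult_le_compat_l. nra. lra. }
          assert (Rabs a * s * (Rabs b * t / (Rabs a * s + 1)) < Rabs b * t).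
          { pose proof (Rabs_pos a). pose proof (Rabs_pos_lt b Hb).
            apply (Rmult_lt_reg_r (Rabs a * s + 1)). nra.
            field_simplify; nra. }
          lra. }
        assert (EE : a * (r ^ n * m ^ n) * s + b * ((-1) ^ n * m ^ n) * t
                     = m ^ n * (a * s * r ^ n + (b * (-1) ^ n) * t)) by ring.
        rewrite EE, Hbn in HNT. nra. }
      assert (b * (-1) ^ N <> 0) by (apply Rmult_integral_contrapositive; split; auto; apply pow_nonzero; lra).
      destruct (Rlt_dec (b * (-1) ^ N) 0).
      - apply (key N); auto.
      - apply (key (S N)); [auto|]. simpl. nra. }
    exists a. split.
    + specialize (HNT 0%nat). rewrite Hk, Hb in HNT. simpl in HNT. nra.
    + rewrite Hx, Hb. unfold vscale; simpl; f_equal; ring.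
  - intros [k [hk ->]]. intro n. unfold vscale.
    replace (k * fst beta1, k * snd beta1) with (k * fst beta1 + 0 * fst beta1, k * snd beta1 + 0 * snd beta1) by (f_equal; ring).
    rewrite lin, P1. destruct beta1 as [u1 u2]. unfold row2_app, vscale in *; simpl in *.
    pose proof (pow_lt l1 n h1).
    assert (E : b1 B * (k * (l1 ^ n * u1) + 0 * (l1 ^ n * u1)) + b2 B * (k * (l1 ^ n * u2) + 0 * (l1 ^ n * u2))
             = k * l1 ^ n * (b1 B * u1 + b2 B * u2)) by ring.
    rewrite E. apply Rmult_lt_0_compat; [apply Rmult_lt_0_compat|]; lra.
Qed.
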